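(* Let $1\to A\to E\xrightarrow{\pi} G\to 1$ be an extension of groups. Let $SQ$ denote either the construction $H\mapsto(\operatorname{Conj}_n(H),\mathrm{inv})$ for a fixed $n\ge 1$, or the construction $H\mapsto(\operatorname{Core}(H),\mathrm{id})$ (the same construction for all groups involved). Then there exists a dynamical cocycle $(\alpha,\beta)$ of the symmetric quandle $SQ(G)$ over the family of sets $S=\{S_x\}_{x\in G}$ with $S_x=A$ (the underlying set of $A$, i.e. of $SQ(A)$) for every $x$, such that $SQ(E)$ is isomorphic as a symmetric quandle to $SQ(G)\times_{(\alpha,\beta)}SQ(A)$.
   Context: For a group $H$ and $n\ge1$, the $n$-conjugation quandle $\operatorname{Conj}_n(H)$ is the set $H$ with $x*y=y^{-n}xy^{n}$, and $\mathrm{inv}(x)=x^{-1}$ is a good involution on it. The core quandle $\operatorname{Core}(H)$ is the set $H$ with $x*y=yx^{-1}y$, and $\mathrm{id}$ is a good involution on it. Here a quandle is a set with binary operation $*$ such that each $x\mapsto x*y$ is bijective (inverse $x\mapsto x*^{-1}y$), $(x*y)*z=(x*z)*(y*z)$ and $x*x=x$; a good involution is $\rho$ with $\rho^2=\mathrm{id}$, $\rho(x*y)=\rho(x)*y$, $x*\rho(y)=x*^{-1}y$, and $(X,\rho)$ is then a symmetric quandle; symmetric quandle homomorphisms preserve $*$ and commute with the involutions. A dynamical cocycle of a symmetric quandle $(X,\rho)$ over a family of sets $S=\{S_x\}$ consists of maps $\alpha_{x,y}:S_x\times S_y\to S_{x*y}$, $\beta_x:S_x\to S_{\rho(x)}$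 such that for all $x,y,z$, $s\in S_x,t\in S_y,w\in S_z$ (with $\alpha_{x,y}(t)(s):=\alpha_{x,y}(s,t)$): (1) $\alpha_{x,y}(t)$ is bijective $S_x\to S_{x*y}$; (2) $\alpha_{x*y,z}(\alpha_{x,y}(s,t),w)=\alpha_{x*z,y*z}(\alpha_{x,z}(s,w),\alpha_{y,z}(t,w))$; (3) $\alpha_{\rho(x),y}(\beta_x(s),t)=\beta_{x*y}(\alpha_{x,y}(s,t))$; (4) $\beta_{\rho(x)}\beta_x(s)=s$; (5) $\alpha_{x,\rho(y)}(\beta_y(t))(s)=(\alpha_{x*^{-1}y,y}(t))^{-1}(s)$; (6) $\alpha_{x,x}(s,s)=s$. The extension $X\times_{(\alpha,\beta)}S$ is the set $\{(x,s)\mid x\in X,s\in S_x\}$ with $(x,s)*(y,t)=(x*y,\alpha_{x,y}(s,t))$ and involution $(x,s)\mapsto(\rho(x),\beta_x(s))$; it is a symmetric quandle. *)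

(* Defs.v *)
Set Implicit Arguments.

Record group := Group {
  carrier :> Type;
  gmul : carrier -> carrier -> carrier;
  gone : carrier;
  ginv : carrier -> carrier;
  gmulA : forall x y z, gmul x (gmul y z) = gmul (gmul x y) z;
  gmul1x : forall x, gmul gone x = x;
  gmulx1 : forall x, gmul x gone = x;
  gmulVx : forall x, gmul (ginv x) x = gone;
  gmulxV : forall x, gmul x (ginv x) = gone
}.

Arguments gmul {g} _ _.
Arguments gone {g}.
Arguments ginv {g} _.

Fixpoint gpow {H : group} (y : H) (n : nat) : H :=
  match n with O => gone | S m => gmul (gpow y m) y end.

Definition is_hom {H K : group} (f : H -> K) : Prop :=
  forall x y, f (gmul x y) = gmul (f x) (f y).

Definition group_extension {A E G : group} (i : A -> E) (pi : E -> G) : Prop :=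
  is_hom i /\ is_hom pi /\
  (forall a b, i a = i b -> a = b) /\
  (forall g, exists e, pi e = g) /\
  (forall e, pi e = gone <-> exists a, i a = e).

(** [SQConj n] is H |-> (Conj_n(H), inv);  [SQCore] is H |-> (Core(H), id). *)
Inductive sqkind := SQConj (n : nat) | SQCore.

Definition sq_valid (k : sqkind) : Prop :=
  match k with SQConj n => 1 <= n | SQCore => True end.

Definition sq_op (k : sqkind) {H : group} (x y : H) : H :=
  match k with
  | SQConj n => gmul (gmul (ginv (gpow y n)) x) (gpow y n)
  | SQCore => gmul (gmul y (ginv x)) y
  end.

Definition sq_invop (k : sqkind) {H : group} (x y : H) : H :=
  match k with
  | SQConj n => gmul (gmul (gpow y n) x) (ginv (gpow y n))
  | SQCore => gmul (gmul y (ginv x)) y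
  end.

Definition sq_rho (k : sqkind) {H : group} (x : H) : H :=
  match k with
  | SQConj _ => ginv x
  | SQCore => x
  end.

(** alpha x y s t = alpha_{x,y}(s,t),  beta x s = beta_x(s). *)
Definition dyn_cocycle (k : sqkind) {G : group} {S : Type}
    (alpha : G -> G -> S -> S -> S) (beta : G -> S -> S) : Prop :=
  let op := sq_op k (H:=G) in
  let iop := sq_invop k (H:=G) in
  let rho := sq_rho k (H:=G) in
  (forall x y t, (forall s1 s2, alpha x y s1 t = alpha x y s2 t -> s1 = s2) /\
                 (forall s', exists s, alpha x y s t = s')) /\
  (forall x y z s t w,
      alpha (op x y) z (alpha x y s t) w =
      alpha (op x z) (op y z) (alpha x z s w) (alpha y z t w)) /\
  (forall x y s t, alpha (rho x) y (beta x s) t = beta (op x y) (alpha x y s t)) /\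
  (forall x s, beta (rho x) (beta x s) = s) /\
  (* (5) alpha_{x,rho y}(beta_y t)(s) = (alpha_{x *^-1 y, y}(t))^-1 (s),
         written out: alpha_{x *^-1 y, y}(t) maps the left side to s *)
  (forall x y s t, alpha (iop x y) y (alpha x (rho y) s (beta y t)) t = s) /\
  (forall x s, alpha x x s s = s).

Definition ext_op (k : sqkind) {G : group} {S : Type}
    (alpha : G -> G -> S -> S -> S) (p q : G * S) : G * S :=
  (sq_op k (fst p) (fst q), alpha (fst p) (fst q) (snd p) (snd q)).

Definition ext_rho (k : sqkind) {G : group} {S : Type}
    (beta : G -> S -> S) (p : G * S) : G * S :=
  (sq_rho k (fst p), beta (fst p) (snd p)).

Definition sym_quandle_iso {X Y : Type} (opX : X -> X -> X) (rhoX : X -> X)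
    (opY : Y -> Y -> Y) (rhoY : Y -> Y) : Prop :=
  exists (f : X -> Y) (g : Y -> X),
    (forall x, g (f x) = x) /\ (forall y, f (g y) = y) /\
    (forall x1 x2, f (opX x1 x2) = opY (f x1) (f x2)) /\
    (forall x, f (rhoX x) = rhoY (f x)).

(* Main.v *)
Require Import Defs.
From Stdlib Require Import ClassicalEpsilon.

Section GL.
Variable H : group.
Implicit Types x y z p : H.

Lemma c1 p y : gmul (gmul p y) (ginv y) = p.
Proof. rewrite <- gmulA, gmulxV, gmulx1. reflexivity. Qed.
Lemma c2 p y : gmul (gmul p (ginv y)) y = p.
Proof. rewrite <- gmulA, gmulVx, gmulx1. reflexivity. Qed.
Lemma inv_uniq x y : gmul x y = gone -> ginv x = y.
Proof. intro h. rewrite <- (gmulx1 _ (ginv x)), <- h, gmulA, gmulVx, gmul1x. reflexivity. Qed.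
Lemma ginv_mul x y : ginv (gmul x y) = gmul (ginv y) (ginv x).
Proof. apply inv_uniq. rewrite gmulA, c1, gmulxV. reflexivity. Qed.
Lemma ginv_inv x : ginv (ginv x) = x.
Proof. apply inv_uniq. apply gmulVx. Qed.
Lemma ginv_one : ginv (@gone H) = gone.
Proof. apply inv_uniq. apply gmulx1. Qed.
End GL.

Ltac gnorm := repeat progress (rewrite ?ginv_mul, ?ginv_inv, ?ginv_one, ?gmulA, ?c1, ?c2, ?gmulxV, ?gmulVx, ?gmul1x, ?gmulx1).

Lemma gpow_comm (H : group) (b : H) n : gmul (gpow b n) b = gmul b (gpow b n).
Proof. induction n; cbn [gpow]. rewrite gmul1x, gmulx1; reflexivity.
rewrite IHn at 1. rewrite gmulA. reflexivity. Qed.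

Lemma gpow_inv (H : group) (b : H) n : gpow (ginv b) n = ginv (gpow b n).
Proof. induction n; cbn [gpow]. rewrite ginv_one; reflexivity.
rewrite IHn, gpow_comm, ginv_mul. reflexivity. Qed.

Lemma gpow_conj (H : group) (u v : H) n :
  gpow (gmul (gmul (ginv u) v) u) n = gmul (gmul (ginv u) (gpow v n)) u.
Proof. induction n; cbn [gpow]. gnorm. reflexivity.
rewrite IHn. gnorm. reflexivity. Qed.

Section Q.
Variable k : sqkind.
Variable H : group.
Implicit Types a b c : H.

Lemma q_opinv a b : sq_op k (sq_invop k a b) b = a.
Proof. destruct k; simpl; gnorm; reflexivity. Qed.
Lemma q_invop a b : sq_invop k (sq_op k a b) b = a.
Proof. destruct k; simpl; gnorm; reflexivity. Qed.
Lemma q_dist a b c : sq_op k (sq_op k a b) c = sq_op k (sq_op k a c) (sq_op k b c).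
Proof. destruct k; simpl. rewrite gpow_conj. gnorm. reflexivity. gnorm. reflexivity. Qed.
Lemma q_rho_op a b : sq_op k (sq_rho k a) b = sq_rho k (sq_op k a b).
Proof. destruct k; simpl; gnorm; reflexivity. Qed.
Lemma q_rho2 a : sq_rho k (sq_rho k a) = a.
Proof. destruct k; simpl; gnorm; reflexivity. Qed.
Lemma q_iop a b : sq_invop k a b = sq_op k a (sq_rho k b).
Proof. destruct k; simpl. rewrite gpow_inv. gnorm. reflexivity. reflexivity. Qed.
Lemma q_idem a : sq_op k a a = a.
Proof. destruct k; simpl. rewrite <- gmulA, <- gpow_comm. gnorm. reflexivity.
gnorm. reflexivity. Qed.
End Q.

Section Hom.
Variables (E G : group) (pi : E -> G) (hp : is_hom pi).
Lemma hom1 : pi gone = gone.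
Proof. pose proof (hp gone gone) as h. rewrite gmul1x in h.
rewrite <- (c1 _ (pi gone) (pi gone)). rewrite <- h at 1. gnorm. reflexivity. Qed.
Lemma homV x : pi (ginv x) = ginv (pi x).
Proof. symmetry. apply inv_uniq. rewrite <- hp, gmulxV. apply hom1. Qed.
Lemma homP x n : pi (gpow x n) = gpow (pi x) n.
Proof. induction n; cbn [gpow]. apply hom1. rewrite hp, IHn. reflexivity. Qed.
Lemma hom_op k a b : pi (sq_op k a b) = sq_op k (pi a) (pi b).
Proof. destruct k; simpl; rewrite ?hp, ?homV, ?homP; reflexivity. Qed.
Lemma hom_iop k a b : pi (sq_invop k a b) = sq_invop k (pi a) (pi b).
Proof. destruct k; simpl; rewrite ?hp, ?homV, ?homP; reflexivity. Qed.
Lemma hom_rho k a : pi (sq_rho k a) = sq_rho k (pi a).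
Proof. destruct k; simpl; rewrite ?homV; reflexivity. Qed.
End Hom.

Lemma transport (k : sqkind) (A E G : group) (pi : E -> G)
  (Phi : E -> G * A) (Psi : G * A -> E) :
  (forall e, Psi (Phi e) = e) -> (forall p, Phi (Psi p) = p) ->
  (forall e, fst (Phi e) = pi e) -> is_hom pi ->
  exists (alpha : G -> G -> A -> A -> A) (beta : G -> A -> A),
    dyn_cocycle k alpha beta /\
    sym_quandle_iso (sq_op k (H:=E)) (sq_rho k (H:=E))
                    (ext_op k alpha) (ext_rho k beta).
Proof.
intros PsiPhi PhiPsi fstPhi hp.
set (alpha := fun (x y : G) (s t : A) => snd (Phi (sq_op k (Psi (x, s)) (Psi (y, t))))).
set (beta := fun (x : G) (s : A) => snd (Phi (sq_rho k (Psi (x, s))))).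
assert (piPsi : forall x s, pi (Psi (x, s)) = x).
{ intros. rewrite <- fstPhi, PhiPsi. reflexivity. }
assert (PhiE : forall e, Phi e = (pi e, snd (Phi e))).
{ intros. rewrite <- fstPhi. apply surjective_pairing. }
assert (PsiOp : forall x y s t, Psi (sq_op k x y, alpha x y s t) = sq_op k (Psi (x, s)) (Psi (y, t))).
{ intros. unfold alpha. set (e := sq_op k (Psi (x, s)) (Psi (y, t))).
  transitivity (Psi (Phi e)); [|apply PsiPhi]. f_equal.
  rewrite (PhiE e). f_equal. unfold e. rewrite (hom_op _ _ _ hp), !piPsi. reflexivity. }
assert (PsiRho : forall x s, Psi (sq_rho k x, beta x s) = sq_rho k (Psi (x, s))).
{ intros. unfold beta. set (e := sq_rho k (Psi (x, s))).
  transitivity (Psi (Phi e)); [|apply PsiPhi]. f_equal.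
  rewrite (PhiE e). f_equal. unfold e. rewrite (hom_rho _ _ _ hp), !piPsi. reflexivity. }
assert (PsiInj : forall u u' (a b : A), Psi (u, a) = Psi (u', b) -> a = b).
{ intros u u' a b h. apply (f_equal (fun e => snd (Phi e))) in h.
  rewrite !PhiPsi in h. exact h. }
exists alpha, beta. split.
- unfold dyn_cocycle. cbv zeta. split; [|split; [|split; [|split; [|split]]]].
  + intros x y t. split.
    * intros s1 s2 h. assert (h2 : Psi (sq_op k x y, alpha x y s1 t) = Psi (sq_op k x y, alpha x y s2 t)) by (rewrite h; reflexivity).
      rewrite !PsiOp in h2. apply (f_equal (fun e => sq_invop k e (Psi (y, t)))) in h2.
      rewrite !q_invop in h2. apply PsiInj in h2. exact h2.
    * intros s'. set (e0 := sq_invop k (Psi (sq_op k x y, s')) (Psi (y, t))).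
      exists (snd (Phi e0)).
      assert (he0 : Psi (x, snd (Phi e0)) = e0).
      { transitivity (Psi (Phi e0)); [|apply PsiPhi]. f_equal.
        rewrite (PhiE e0). f_equal. unfold e0. rewrite (hom_iop _ _ _ hp), !piPsi, q_invop. reflexivity. }
      apply (PsiInj (sq_op k x y) (sq_op k x y)).
      rewrite PsiOp, he0. unfold e0. rewrite q_opinv. reflexivity.
  + intros. eapply PsiInj. rewrite !PsiOp. apply q_dist.
  + intros. eapply PsiInj. rewrite PsiOp, PsiRho, PsiRho, PsiOp. apply q_rho_op.
  + intros. eapply PsiInj. rewrite !PsiRho. rewrite q_rho2. reflexivity.
  + intros. eapply PsiInj with (u' := x). rewrite PsiOp.
    rewrite (q_iop k G x y), PsiOp, PsiRho, <- q_iop, q_opinv. reflexivity.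
  + intros. eapply PsiInj with (u' := x). rewrite PsiOp. apply q_idem.
- exists Phi, Psi. split; [exact PsiPhi|split; [exact PhiPsi|split]].
  + intros e1 e2. unfold ext_op. rewrite (PhiE (sq_op k e1 e2)), !fstPhi.
    rewrite (hom_op _ _ _ hp). f_equal. unfold alpha.
    rewrite <- !fstPhi, <- (surjective_pairing (Phi e1)), <- (surjective_pairing (Phi e2)), !PsiPhi.
    reflexivity.
  + intros e. unfold ext_rho. rewrite (PhiE (sq_rho k e)), !fstPhi, (hom_rho _ _ _ hp).
    f_equal. unfold beta. rewrite <- fstPhi, <- surjective_pairing, PsiPhi. reflexivity.
Qed.

Theorem corollary5p2 (k : sqkind) (A E G : group) (i : A -> E) (pi : E -> G) :
  sq_valid k ->
  group_extension i pi ->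
  exists (alpha : G -> G -> A -> A -> A) (beta : G -> A -> A),
    dyn_cocycle k alpha beta /\
    sym_quandle_iso (sq_op k (H:=E)) (sq_rho k (H:=E))
                    (ext_op k alpha) (ext_rho k beta).
Proof.
intros _ [hi [hp [iinj [surj ker]]]].
set (sig := fun g => proj1_sig (constructive_indefinite_description _ (surj g))).
assert (hsig : forall g, pi (sig g) = g).
{ intro g. unfold sig. destruct (constructive_indefinite_description _ _). exact e. }
assert (hk : forall e, exists a, i a = gmul (ginv (sig (pi e))) e).
{ intro e. apply ker. rewrite hp, (homV _ _ _ hp), hsig. apply gmulVx. }
set (a := fun e => proj1_sig (constructive_indefinite_description _ (hk e))).
assert (ha : forall e, i (a e) = gmul (ginv (sig (pi e))) e).
{ intro e. unfold a. destruct (constructive_indefinite_description _ _). exact e0. }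
apply (transport k A E G pi (fun e => (pi e, a e)) (fun p => gmul (sig (fst p)) (i (snd p)))).
- intro e. simpl. rewrite ha. gnorm. reflexivity.
- intros [g b]. simpl.
  assert (h1 : pi (gmul (sig g) (i b)) = g).
  { rewrite hp, hsig. assert (pi (i b) = gone) as -> by (apply ker; eauto). apply gmulx1. }
  rewrite h1. f_equal. apply iinj. rewrite ha, h1. gnorm. reflexivity.
- reflexivity.
- exact hp.
Qed.
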